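(* Let $K\ge 2$, $a\ge 1$, $b\ge 1$ and $L\in[2:K]$ be integers. For the $(K,a,b,L)$ multiaccess coded caching problem for location-based content with cache size $M\ge 0$, the optimal worst-case load is $$R^\star=\begin{cases} K-\dfrac{K}{a+b}M, & 0\le M\le a+b,\\ 0, & M\ge a+b.\end{cases}$$
   Context: For integers $x\le y$, $[x:y]=\{x,x+1,\dots,y\}$ and $[n]=[1:n]$. For integers $c$ and $m\ge1$, $\langle c\rangle_m$ denotes the unique element of $\{1,\dots,m\}$ congruent to $c$ modulo $m$. For $k\in[K]$ define $\mathcal D_{k,1}=[(k-1)(a+b)+1:ka+(k-1)b]$, $\mathcal D_{k,2}=[ka+(k-1)b+1:k(a+b)]$, $\mathcal D_{k,3}=\mathcal D_{\langle k+1\rangle_K,1}$, and $\mathcal D_k=\mathcal D_{k,1}\cup\mathcal D_{k,2}\cup\mathcal D_{k,3}$. The $(K,a,b,L)$ multiaccess coded caching problem for location-based content: a server has $N=K(a+b)$ files $W_1,\dots,W_N$, each of $B$ independent uniformly distributed bits. There are $K$ cache nodes each storing $MB$ bits, with contents $Z_k=\phi_k(W_1,\dots,W_N)$ fixed without knowledge of demands, and $K$ users; user $k$ has free access to the cache nodes $k,\langle k+1\rangle_K,\dots,\langle k+L-1\rangle_K$. For each demand vector $\mathbf d\in\mathcal D_1\times\cdots\times\mathcal D_K$ the server broadcasts $X=\psi(\mathbf d,W_1,\dots,W_N)\in\{0,1\}^{RB}$, and each user $k$ must recover $W_{d_k}$ exactly from $(\mathbf d, Z_k,Z_{\langle k+1\rangle_K},\dots,Z_{\langle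 k+L-1\rangle_K},X)$. $R$ is the worst-case load; $R^\star$ is the infimum of achievable loads over all schemes (arbitrary, possibly coded, placement) and all $B$. *)

(* Defs.v *)
From mathcomp Require Import all_boot all_order all_algebra.
From mathcomp Require Import boolp classical_sets reals.
Set Implicit Arguments. Unset Strict Implicit. Unset Printing Implicit Defensive.
Import Order.TTheory GRing.Theory Num.Theory.

(* <c>_m for c >= 1: the element of {1..m} congruent to c mod m *)
Definition cmod (m c : nat) : nat := ((c + m).-1 %% m).+1.

(* Demand sets, 1-based user index k and 1-based file index x, as in the paper *)
Definition D1 (K a b k x : nat) : bool :=
  ((k - 1) * (a + b) + 1 <= x) && (x <= k * a + (k - 1) * b).
Definition D2 (K a b k x : nat) : bool :=
  (k * a + (k - 1) * b + 1 <= x) && (x <= k * (a + b)).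
Definition D3 (K a b k x : nat) : bool := D1 K a b (cmod K (k + 1)) x.
Definition Dk (K a b k x : nat) : bool := [|| D1 K a b k x, D2 K a b k x | D3 K a b k x].

(* Files W_1..W_N are represented 0-based: file index i : 'I_N stands for W_{i+1};
   user / cache node i : 'I_K stands for user / cache node i+1. *)
Definition valid_demand (K a b : nat) (d : 'I_K -> 'I_(K * (a + b))) : Prop :=
  forall k : 'I_K, Dk K a b k.+1 (d k).+1.

Lemma ord_pos (K : nat) (k : 'I_K) : 0 < K.
Proof. by apply: leq_ltn_trans (ltn_ord k). Qed.

(* the (j+1)-th cache node accessed by user k (0-based): node (k + j) mod K,
   i.e. in 1-based terms user k+1 accesses <k+1>, <k+2>, ..., <k+L>. *)
Definition acc_node (K : nat) (k : 'I_K) (j : nat) : 'I_K :=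
  Ordinal (ltn_pmod (k + j) (ord_pos k)).

Definition achievable {R : realType} (K a b L : nat) (M rho : R) : Prop :=
  exists (B m r : nat),
    [/\ (0 < B)%N, (m%:R <= M * B%:R)%R & (r%:R <= rho * B%:R)%R] /\
    exists (phi : 'I_K -> ('I_(K * (a + b)) -> B.-tuple bool) -> m.-tuple bool)
           (psi : ('I_K -> 'I_(K * (a + b))) -> ('I_(K * (a + b)) -> B.-tuple bool)
                  -> r.-tuple bool)
           (dec : 'I_K -> ('I_K -> 'I_(K * (a + b))) -> ('I_L -> m.-tuple bool)
                  -> r.-tuple bool -> B.-tuple bool),
      forall d : 'I_K -> 'I_(K * (a + b)), @valid_demand K a b d ->
      forall (W : 'I_(K * (a + b)) -> B.-tuple bool) (k : 'I_K),
        dec k d (fun j : 'I_L => phi (acc_node k j) W) (psi d W) = W (d k).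

Definition Rstar {R : realType} (K a b L : nat) (M : R) : R :=
  inf [set rho : R | achievable K a b L M rho].

(* Main.v *)
Require Import Defs.
From mathcomp Require Import all_boot all_order all_algebra.
From mathcomp Require Import boolp classical_sets reals.
From mathcomp Require Import ring lra zify.
Import Order.TTheory GRing.Theory Num.Theory.

Section Comb.
Variables (K a b : nat).

Lemma file_lt (g : 'I_K) (j : 'I_(a+b)) : (g * (a + b) + j < K * (a + b))%N.
Proof.
have := ltn_ord g; have := ltn_ord j => h1 h2. nia.
Qed.

Definition file (g : 'I_K) (j : 'I_(a+b)) : 'I_(K * (a+b)) := Ordinal (file_lt g j).

Lemma ab_pos (i : 'I_(K * (a+b))) : (0 < a + b)%N.
Proof. have := ltn_ord i; move: (nat_of_ord i) => n; nia. Qed.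

Lemma grp_lt (i : 'I_(K * (a+b))) : (i %/ (a+b) < K)%N.
Proof. by rewrite ltn_divLR ?ab_pos. Qed.

Lemma idx_lt (i : 'I_(K * (a+b))) : (i %% (a+b) < a + b)%N.
Proof. by rewrite ltn_mod ab_pos. Qed.

Lemma file_surj (i : 'I_(K * (a+b))) :
  file (Ordinal (grp_lt i)) (Ordinal (idx_lt i)) = i.
Proof. apply: val_inj => /=; by rewrite -divn_eq. Qed.

Lemma file_valid (j : 'I_(a+b)) : @valid_demand K a b (fun k => file k j).
Proof.
move=> k; rewrite /Dk /D1 /D2 /=.
have := ltn_ord j; have := ltn_ord k => h1 h2.
case: (ltnP j a) => hj.
  apply/orP; left; apply/andP; split; nia.
apply/orP; right; apply/orP; left; apply/andP; split; nia.
Qed.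
End Comb.

Lemma converse_nat (K a b L B m r : nat)
  (phi : 'I_K -> ('I_(K * (a + b)) -> B.-tuple bool) -> m.-tuple bool)
  (psi : ('I_K -> 'I_(K * (a + b))) -> ('I_(K * (a + b)) -> B.-tuple bool)
                  -> r.-tuple bool)
  (dec : 'I_K -> ('I_K -> 'I_(K * (a + b))) -> ('I_L -> m.-tuple bool)
                  -> r.-tuple bool -> B.-tuple bool) :
  (forall d : 'I_K -> 'I_(K * (a + b)), @valid_demand K a b d ->
      forall (W : 'I_(K * (a + b)) -> B.-tuple bool) (k : 'I_K),
        dec k d (fun j : 'I_L => phi (acc_node k j) W) (psi d W) = W (d k)) ->
  (K * (a + b) * B <= K * m + (a + b) * r)%N.
Proof.
move=> H.
pose F (W : {ffun 'I_(K * (a + b)) -> B.-tuple bool}) :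
  {ffun 'I_K -> m.-tuple bool} * {ffun 'I_(a+b) -> r.-tuple bool} :=
  ([ffun k => phi k W], [ffun j => psi (fun k => @file K a b k j) W]).
have Finj : injective F.
  move=> W1 W2 [] /ffunP E1 /ffunP E2; apply/ffunP => i.
  have [g [j ->]] : exists g j, i = @file K a b g j.
    by exists (Ordinal (@grp_lt K a b i)), (Ordinal (@idx_lt K a b i)); rewrite file_surj.
  have V := @file_valid K a b j.
  rewrite -[W1 _](H _ V W1 g) -[W2 _](H _ V W2 g).
  congr dec; last by have := E2 j; rewrite !ffunE.
  by apply: funext => l; have := E1 (acc_node g l); rewrite !ffunE.
have := leq_card F Finj.
rewrite card_prod !card_ffun !card_tuple !card_bool !card_ord -!expnM -expnD.
rewrite leq_exp2l // => h. nia.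
Qed.

Lemma inj_of_card (T U : finType) : #|T| <= #|U| -> {f : T -> U | injective f}.
Proof.
move=> h; exists (fun x => enum_val (widen_ord h (enum_rank x))).
move=> x y /enum_val_inj /(congr1 val) /= /val_inj /enum_rank_inj //.
Qed.

Lemma div_eq_k (x k c : nat) : k * c <= x -> x < k.+1 * c -> x %/ c = k.
Proof.
move=> h1 h2; have c0 : 0 < c by case: c h2 h1 => //; rewrite muln0.
apply/eqP; rewrite eqn_leq -ltnS ltn_divLR // h2 leq_divRL //.
Qed.

Lemma demand_grp (K a b x : nat) (k : nat) : (k < K)%N ->
  Dk K a b k.+1 x.+1 -> x %/ (a+b) = k \/ x %/ (a+b) = (k + 1) %% K.
Proof.
move=> kK; rewrite /Dk /D3 /D1 /D2 /cmod.
have -> : (k.+1 + 1 + K).-1 = (k + 1) + K by lia.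
rewrite modnDr.
case/or3P => /andP [h1 h2].
- left; apply: div_eq_k; nia.
- left; apply: div_eq_k; nia.
- right; apply: div_eq_k; nia.
Qed.

Lemma achieve_nat (K a b L B s : nat) : (2 <= L)%N -> (s <= B)%N ->
  exists (phi : 'I_K -> ('I_(K * (a + b)) -> B.-tuple bool) -> (s * (a+b)).-tuple bool)
         (psi : ('I_K -> 'I_(K * (a + b))) -> ('I_(K * (a + b)) -> B.-tuple bool)
                  -> ((B - s) * K).-tuple bool)
         (dec : 'I_K -> ('I_K -> 'I_(K * (a + b))) -> ('I_L -> (s * (a+b)).-tuple bool)
                  -> ((B - s) * K).-tuple bool -> B.-tuple bool),
      forall d : 'I_K -> 'I_(K * (a + b)), @valid_demand K a b d ->
      forall (W : 'I_(K * (a + b)) -> B.-tuple bool) (k : 'I_K),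
        dec k d (fun j : 'I_L => phi (acc_node k j) W) (psi d W) = W (d k).
Proof.
move=> L2 sB.
have [sp spI] : {f : B.-tuple bool -> (s.-tuple bool * (B - s).-tuple bool) | injective f}.
  apply: inj_of_card; rewrite card_prod !card_tuple card_bool -expnD subnKC //.
have [e1 e1I] : {f : {ffun 'I_(a+b) -> s.-tuple bool} -> (s * (a+b)).-tuple bool | injective f}.
  apply: inj_of_card; rewrite card_ffun !card_tuple card_bool card_ord -expnM //.
have [e2 e2I] : {f : {ffun 'I_K -> (B - s).-tuple bool} -> ((B - s) * K).-tuple bool | injective f}.
  apply: inj_of_card; rewrite card_ffun !card_tuple card_bool card_ord -expnM //.
pose phi (g : 'I_K) (W : 'I_(K * (a + b)) -> B.-tuple bool) :=
  e1 [ffun j => (sp (W (@file K a b g j))).1].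
pose psi (d : 'I_K -> 'I_(K * (a + b))) (W : 'I_(K * (a + b)) -> B.-tuple bool) :=
  e2 [ffun k => (sp (W (d k))).2].
have key : forall d, @valid_demand K a b d -> forall W W' (k : 'I_K),
    (forall l : 'I_L, phi (acc_node k l) W' = phi (acc_node k l) W) ->
    psi d W' = psi d W -> W' (d k) = W (d k).
  move=> d V W W' k Hphi Hpsi.
  apply: spI.
  have E2 : (sp (W' (d k))).2 = (sp (W (d k))).2.
    by have /ffunP /(_ k) := e2I _ _ Hpsi; rewrite !ffunE.
  set x := d k.
  have [l Hl] : exists l : 'I_L, val (acc_node k l) = x %/ (a+b).
    case: (@demand_grp K a b x k (ltn_ord k) (V k)) => ->.
      by exists (Ordinal (leq_trans (isT : 0 < 2) L2)); rewrite /= addn0 modn_small.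
    by exists (Ordinal L2).
  have Hx : x = @file K a b (acc_node k l) (Ordinal (@idx_lt K a b x)).
    by apply: val_inj; move: Hl; rewrite /= => ->; rewrite -divn_eq.
  have E1 : (sp (W' x)).1 = (sp (W x)).1.
    have /ffunP /(_ (Ordinal (@idx_lt K a b x))) := e1I _ _ (Hphi l).
    by rewrite !ffunE -Hx.
  by case: (sp (W' x)) E1 E2 => ? ?; case: (sp (W x)) => ? ? /= -> ->.
exists phi, psi.
exists (fun (k : 'I_K) (d : 'I_K -> 'I_(K * (a + b))) (c : 'I_L -> (s * (a+b)).-tuple bool) (y : ((B - s) * K).-tuple bool) =>
  if [pick W' : {ffun 'I_(K * (a + b)) -> B.-tuple bool} |
        [forall l : 'I_L, phi (acc_node k l) W' == c l] && (psi d W' == y)] is Some W'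
  then W' (d k) else [tuple of nseq B false]).
move=> d V W k.
case: pickP => [W' /andP [/forallP H1 /eqP H2] | H].
  apply: key => // l; exact/eqP.
have := H [ffun i => W i].
have E : fun_of_fin [ffun i => W i] = W by apply: funext => i; rewrite ffunE.
rewrite E eqxx andbT.
by move/forallP => []; move=> l; rewrite eqxx.
Qed.
Local Open Scope ring_scope.

Lemma lower (R : realType) (K a b L : nat) (M rho : R) :
  (1 <= a)%N -> 0 <= M -> achievable K a b L M rho ->
  (if M <= (a + b)%:R then K%:R - K%:R / (a + b)%:R * M else 0) <= rho.
Proof.
move=> a1 M0 [B [m [r [[B0 hm hr] [phi [psi [dec H]]]]]]].
have hn := @converse_nat K a b L B m r phi psi dec H.
have hnR : K%:R * (a + b)%:R * B%:R <= K%:R * m%:R + (a + b)%:R * r%:R :> R.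
  by rewrite -!natrM -natrD ler_nat.
set c := (a + b)%:R : R in hnR *.
have c0 : 0 < c by rewrite /c ltr0n; lia.
have B0' : 0 < B%:R :> R by rewrite ltr0n.
have K0 : 0 <= K%:R :> R by [].
have r0 : 0 <= r%:R :> R by [].
have rho0 : 0 <= rho.
  have : 0 <= rho * B%:R by apply: le_trans hr.
  by rewrite pmulr_lge0.
have h1 : K%:R * c * B%:R <= (K%:R * M + c * rho) * B%:R.
  apply: (le_trans hnR); rewrite mulrDl -mulrA -mulrA.
  apply: lerD; [apply: ler_wpM2l => //| apply: ler_wpM2l => //; rewrite ltW //].
have h2 : K%:R * c <= K%:R * M + c * rho by rewrite -(ler_pM2r B0').
case: ifP => // _.
have ht : K%:R / c * M * c = K%:R * M.
  by field; rewrite -natrD lt0r_neq0.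

set t := K%:R / c * M in ht *.
nra.
Qed.

Lemma upper (R : realType) (K a b L : nat) (M eps : R) :
  (1 <= a)%N -> (2 <= L)%N -> 0 <= M -> 0 < eps ->
  achievable K a b L M
   ((if M <= (a + b)%:R then K%:R - K%:R / (a + b)%:R * M else 0) + eps).
Proof.
move=> a1 L2 M0 e0.
set c := (a + b)%:R : R.
have c0 : 0 < c by rewrite /c ltr0n; lia.
set v := (if M <= c then _ else _).
pose tt := if M <= c then M / c else 1.
have tt0 : 0 <= tt by rewrite /tt; case: ifP => // _; rewrite divr_ge0 // ltW.
have tt1 : tt <= 1 by rewrite /tt; case: ifP => // h; rewrite ler_pdivrMr // mul1r.
have ttc : tt * c <= M.
  rewrite /tt; case: ifP => h; first by rewrite divfK // gt_eqF.
  by rewrite mul1r ltW // ltNge h.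
have vtt : v = K%:R * (1 - tt).
  rewrite /v /tt; case: ifP => _; last by rewrite subrr mulr0.
  by rewrite mulrBr mulr1 mulrA mulrAC.
pose B := (Num.truncn (K%:R / eps)).+1.
have B0 : (0 < B)%N by [].
have KB : K%:R < eps * B%:R.
  have := truncnS_gt (K%:R / eps); rewrite -/B ltr_pdivrMr // mulrC //.
pose s := Num.truncn (tt * B%:R).
have s1 : s%:R <= tt * B%:R by rewrite truncn_le mulr_ge0.
have s2 : tt * B%:R < s.+1%:R by apply: truncnS_gt.
have sB : (s <= B)%N.
  rewrite -(ler_nat R); apply: (le_trans s1).
  by rewrite ler_piMl.
have [phi [psi [dec H]]] := @achieve_nat K a b L B s L2 sB.
exists B, (s * (a + b))%N, ((B - s) * K)%N; split; last by exists phi, psi, dec.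
split => //.
  rewrite natrM -/c.
  have : s%:R * c <= tt * B%:R * c by rewrite ler_wpM2r // ltW.
  move=> h; apply: (le_trans h); rewrite mulrAC.
  by apply: ler_wpM2r => //; rewrite ltW.
rewrite natrM natrB // vtt.
have K0 : 0 <= K%:R :> R by [].
rewrite -natr1 in s2.
nra.
Qed.

Theorem theorem3 (R : realType) (K a b L : nat) (M : R) :
  (2 <= K)%N -> (1 <= a)%N -> (1 <= b)%N -> (2 <= L)%N -> (L <= K)%N ->
  0 <= M ->
  Rstar K a b L M =
    (if M <= (a + b)%:R then K%:R - K%:R / (a + b)%:R * M else 0).
Proof.
move=> K2 a1 b1 L2 LK M0.
set v := (if _ then _ else _).
rewrite /Rstar; set S := (X in inf X).
have lb : classical_sets.lbound S v by move=> rho; apply: lower.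
have ne : classical_sets.nonempty S by exists (v + 1); apply: upper.
apply/eqP; rewrite eq_le; apply/andP; split; last exact: lb_le_inf.
apply/ler_addgt0Pr => e e0.
apply: (ge_inf (ex_intro _ v lb)).
exact: upper.
Qed.
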